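(* Let $m>0$, let $n$ be an odd positive integer, let $\epsilon>0$, and let $V=[-m/2,m/2]$. For every $\epsilon$-differentially private facility location mechanism $\mathcal{M}:V^n\to V$ there exists a dataset $D\in V^n$ such that $$\mathrm{FAIR}(D,\mathcal{M}(D))\ge m/2$$ with probability at least $\frac{1}{1+e^{\epsilon}}$ (over the randomness of $\mathcal{M}$).
   Context: A dataset is $D=(x_1,\dots,x_n)\in V^n$ of agent locations, treated as a multiset and indexed so that $x_1\le x_2\le\dots\le x_n$. Since $n$ is odd, the optimal (social-welfare maximizing) facility location is the median $\mathcal{T}(D)=x_{\lceil n/2\rceil}$. Agent $i$'s utility for a facility at $\ell$ is $-|x_i-\ell|$. The individual loss vector is $\mathrm{LOSS}(D,\ell)_i=-|x_i-\mathcal{T}(D)|+|x_i-\ell|$ and $\mathrm{FAIR}(D,\ell)=\max_{1\le i\le n}\mathrm{LOSS}(D,\ell)_i$. Two datasets are neighboring if, as multisets, they differ in exactly one element (one agent's location is changed). A randomized mechanism $\mathcal{M}:V^n\to V$ is $\epsilon$-differentially private if $\Pr[\mathcal{M}(D)\in S]\le e^{\epsilon}\Pr[\mathcal{M}(D')\in S]$ for all neighboring $D,D'$ and all measurable $S\subseteq V$. *)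

(* Defs.v *)
From HB Require Import structures.
From mathcomp Require Import all_boot all_order all_algebra.
From mathcomp Require Import all_classical all_reals all_analysis.
Set Implicit Arguments. Unset Strict Implicit. Unset Printing Implicit Defensive.
Import Order.TTheory GRing.Theory Num.Theory.
Local Open Scope ring_scope.

Section FacilityDefs.
Variable R : realType.

(* optimal location: the median x_{ceil(n/2)} of the sorted dataset
   (1-based), i.e. 0-based index n./2 of the sorted sequence (n odd) *)
Definition median (D : seq R) : R := nth 0 (sort <=%R D) (size D)./2.

Definition loss (D : seq R) (l : R) (x : R) : R :=
  - `|x - median D| + `|x - l|.

(* FAIR(D,l) = max_i LOSS(D,l)_i  (D nonempty; the seed is an element of D) *)
Definition fair (D : seq R) (l : R) : R :=
  \big[Num.max/loss D l (head 0 D)]_(x <- D) loss D l x.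

Definition neighboring (D D' : seq R) : Prop :=
  exists (x y : R) (C : seq R), x != y /\ perm_eq D (x :: C) /\ perm_eq D' (y :: C).

Definition Vset (m : R) : set R := `[- (m / 2), m / 2]%classic.

Definition in_V (m : R) (D : seq R) : Prop := forall x, x \in D -> Vset m x.

End FacilityDefs.

(* Main.v *)
Require Import Defs.
From HB Require Import structures.
From mathcomp Require Import all_boot all_order all_algebra.
From mathcomp Require Import all_classical all_reals all_analysis.
From mathcomp Require Import lra zify.
Import Order.TTheory GRing.Theory Num.Theory.
Local Open Scope ring_scope.

Section H.
Variable R : realType.

Lemma pairwise_nseq (x : R) i : pairwise <=%R (nseq i x).
Proof. elim: i => //= i ->; rewrite andbT; apply/allP => y /nseqP [-> _]; exact: lexx. Qed.

Lemma sorted_nseq2 (a b : R) i j : a <= b -> sorted <=%R (nseq i a ++ nseq j b).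
Proof.
move=> ab; rewrite sorted_pairwise; last exact: le_trans.
rewrite pairwise_cat !pairwise_nseq !andbT.
by apply/allrelP => x y /nseqP [-> _] /nseqP [-> _].
Qed.

Lemma le_fair_mem (D : seq R) l x s z : x \in s ->
  loss D l x <= \big[Num.max/z]_(y <- s) loss D l y.
Proof.
elim: s => // y s IH; rewrite inE big_cons le_max => /orP [/eqP ->|/IH ->].
  by rewrite lexx.
by rewrite orbT.
Qed.

Lemma loss_meas (D : seq R) x : measurable_fun setT (fun l => loss D l x).
Proof.
rewrite /loss; apply: measurable_realfun.measurable_funD => //.
apply: measurableT_comp => //.
exact: measurable_realfun.measurable_funB.
Qed.

Lemma big_meas (D : seq R) z s :
  measurable_fun setT (fun l => \big[Num.max/loss D l z]_(x <- s) loss D l x).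
Proof.
elim: s => [|y s IH].
  under eq_fun do rewrite big_nil. exact: loss_meas.
under eq_fun do rewrite big_cons.
exact: (measurable_realfun.measurable_maxr (loss_meas _ _) IH).
Qed.

Lemma fair_meas (D : seq R) : measurable_fun setT (fair D).
Proof. exact: big_meas. Qed.

Lemma fair_set_meas (D : seq R) c : measurable [set l | c <= fair D l].
Proof.
have := fair_meas D measurableT _ (measurable_itv `[c, +oo[).
rewrite setTI; congr measurable; apply/seteqP; split => l /=;
  by rewrite in_itv /= andbT.
Qed.
End H.
Lemma le_fair (R : realType) (D : seq R) l x : x \in D -> loss D l x <= fair D l.
Proof. exact: le_fair_mem. Qed.

Lemma prob_fin (R : realType) (P : probability R R) A : measurable A ->
  P A = (fine (P A))%:E /\ 0 <= fine (P A) <= 1.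
Proof.
move=> mA.
have h0 : (0 <= P A)%E := measure_ge0 P A.
have h1 : (P A <= 1)%E := probability_le1 P mA.
have hf : P A \is a fin_num.
  by rewrite ge0_fin_numE // (le_lt_trans h1) // ltey.
split; first by rewrite fineK.
by apply/andP; split; rewrite -lee_fin fineK.
Qed.

Theorem theorem5p1 (R : realType) (m : R) (n : nat) (eps : R)
  (M : n.-tuple R -> probability R R) :
  0 < m -> odd n -> 0 < eps ->
  (* the mechanism outputs a location in V *)
  (forall D : n.-tuple R, in_V m D -> M D (Vset m) = 1%E) ->
  (* eps-differential privacy *)
  (forall D D' : n.-tuple R, in_V m D -> in_V m D' -> neighboring D D' ->
     forall S : set R, measurable S -> (S `<=` Vset m)%classic ->
       (M D S <= (expR eps)%:E * M D' S)%E) ->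
  exists D : n.-tuple R, in_V m D /\
    ((1 + expR eps)^-1%:E <= M D ([set l : R | (m / 2 <= fair D l)%R])%classic)%E.
Proof.
move=> m0 hodd eps0 hV hdp.
set k := n./2.
have hn : (k.+1 + k = n)%N.
  have := odd_double_half n; rewrite hodd /= -addnn /k; lia.
set a := - (m / 2); set b := m / 2.
have ab : a <= b by rewrite /a /b; lra.
set s1 := nseq k.+1 a ++ nseq k b.
set s2 := nseq k a ++ nseq k.+1 b.
have hs1 : size s1 == n by rewrite size_cat !size_nseq hn.
have hs2 : size s2 == n by rewrite size_cat !size_nseq addnS -addSn hn.
pose D1 : n.-tuple R := Tuple hs1.
pose D2 : n.-tuple R := Tuple hs2.
have inV : forall s : seq R, (forall x, x \in s -> x = a \/ x = b) -> in_V m s.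
  move=> s hs x /hs [] -> /=; rewrite /Vset /= in_itv /= /a /b; apply/andP; split; lra.
have V1 : in_V m D1.
  by apply: inV => x; rewrite /= mem_cat => /orP [] /nseqP [-> _]; [left|right].
have V2 : in_V m D2.
  by apply: inV => x; rewrite /= mem_cat => /orP [] /nseqP [-> _]; [left|right].
have med1 : median s1 = a.
  rewrite /median (sorted_sort le_trans); last exact: sorted_nseq2.
  rewrite (eqP hs1) -/k nth_cat size_nseq ltnSn nth_nseq ltnSn //.
have med2 : median s2 = b.
  rewrite /median (sorted_sort le_trans); last exact: sorted_nseq2.
  rewrite (eqP hs2) -/k nth_cat size_nseq ltnn subnn nth_nseq //.
have nb : neighboring D2 D1.
  exists b, a, (nseq k a ++ nseq k b); split; first by rewrite gt_eqF // /a /b; lra.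
  split; last exact: perm_refl.
  have := perm_catCA (nseq k a) [:: b] (nseq k b).
  by move=> /(_ (b :: (nseq k a ++ nseq k b))) /= ->; exact: perm_refl.
set F1 := [set l : R | (m / 2 <= fair D1 l)%R]%classic.
set F2 := [set l : R | (m / 2 <= fair D2 l)%R]%classic.
set S1 := `[0, m/2]%classic.
have mF1 : measurable F1 by exact: fair_set_meas.
have mF2 : measurable F2 by exact: fair_set_meas.
have mS1 : measurable S1 by exact: measurable_itv.
have mV : measurable (Vset m) by exact: measurable_itv.
have S1V : (S1 `<=` Vset m)%classic.
  move=> l; rewrite /S1 /Vset /= !in_itv /= => /andP [h1 h2]; apply/andP; split; lra.
have S1F1 : (S1 `<=` F1)%classic.
  move=> l; rewrite /S1 /F1 /= in_itv /= => /andP [h1 h2].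
  have ha : a \in s1 by rewrite mem_cat mem_nseq ltn0Sn eqxx.
  apply: le_trans; last exact: (@le_fair _ s1 l a ha).
  rewrite /loss med1 subrr normr0 oppr0 add0r ler_normr; apply/orP; right.
  rewrite /a; lra.
have VF2 : (Vset m `<=` F2 `|` S1)%classic.
  move=> l; rewrite /Vset /= in_itv /= => /andP [h1 h2].
  have [hl|hl] := leP l 0.
    left; rewrite /F2 /=.
    have hb : b \in s2 by rewrite mem_cat !mem_nseq ltn0Sn eqxx orbT.
    apply: le_trans; last exact: (@le_fair _ s2 l b hb).
    rewrite /loss med2 subrr normr0 oppr0 add0r ler_normr; apply/orP; left.
    rewrite /b; lra.
  by right; rewrite /S1 /= in_itv /=; apply/andP; split; lra.
have h1 : M D2 (Vset m) = 1%E by exact: hV.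
have hU : (M D2 (Vset m) <= M D2 ((F2 `|` S1)%classic))%E.
  by apply: le_measure => //; rewrite inE //; exact: measurableU.
have hU2 : (M D2 (F2 `|` S1)%classic <= M D2 F2 + M D2 S1)%E by exact: measureU2.
have hd : (M D2 S1 <= (expR eps)%:E * M D1 S1)%E by exact: hdp.
have hS : (M D1 S1 <= M D1 F1)%E by apply: le_measure => //; rewrite inE.
set p := (1 + expR eps)^-1.
have [hp1|hp1] := leP (p%:E) (M D1 F1); first by exists D1.
have [hp2|hp2] := leP (p%:E) (M D2 F2); first by exists D2.
exfalso.
have [E1 _] := @prob_fin _ (M D1) _ mF1.
have [E2 _] := @prob_fin _ (M D2) _ mF2.
have [E3 _] := @prob_fin _ (M D1) _ mS1.
have [E4 _] := @prob_fin _ (M D2) _ mS1.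
move: hp1 hp2 hU hU2 hd hS; rewrite h1 E1 E2 E3 E4 -EFinM -EFinD !lte_fin !lee_fin.
set f1 := fine _; set f2 := fine _; set t1 := fine _; set t2 := fine _.
move=> hp1 hp2 hU hU2 hd hS.
have e0 : 0 < expR eps := expR_gt0 eps.
have hpe : p + expR eps * p = 1.
  rewrite /p -[X in X + _]mul1r -mulrDl mulfV //; apply: lt0r_neq0; lra.
have hU3 : 1 <= f2 + t1 by rewrite -lee_fin; exact: le_trans hU hU2.
have : expR eps * t2 <= expR eps * f1 by rewrite ler_wpM2l //; lra.
have : expR eps * f1 <= expR eps * p by rewrite ler_wpM2l //; lra.
lra.
Qed.
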